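(* Let $\mathcal S$ be a Stone pseudovariety of $\Omega$-algebras and let $X$ be a topological space. Then there exists an $\mathcal S$-free Stone topological algebra over $X$, and it is uniquely determined up to continuous isomorphism.
   Context: $\Omega=\biguplus_n\Omega_n$ is a topological signature; a topological $\Omega$-algebra is a topological space $A$ with continuous evaluation maps $\Omega_n\times A^n\to A$. A Stone topological algebra is a topological algebra whose underlying space is compact Hausdorff and 0-dimensional. A Stone pseudovariety is a nonempty class of Stone topological $\Omega$-algebras closed under: images under onto continuous homomorphisms whose codomain is a Stone topological algebra, closed subalgebras, and finite direct products. For a class $\mathcal C$, a topological algebra is residually $\mathcal C$ if any two distinct elements are separated by a continuous homomorphism into a member of $\mathcal C$. A continuous map $\iota:X\to S$ into a topological algebra is a generating mapping if $\iota(X)$ generates (algebraically) a dense subalgebra of $S$. An $\mathcal S$-free Stone topological algebra over $X$ is a continuous generating mapping $\iota:X\to S$ into a Stone topological algebra $S$ that is residually $\mathcal S$, such that for every continuous map $\varphi:X\to T$ with $T\in\mathcal S$ there is a unique continuous homomorphism $\hat\varphi:S\to T$ with $\hat\varphi\circ\iota=\varphi$. *)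

(* Defs.v *)
From HB Require Import structures.
From mathcomp Require Import all_boot all_order all_algebra.
From mathcomp Require Import all_classical all_reals all_analysis.
Set Implicit Arguments. Unset Strict Implicit. Unset Printing Implicit Defensive.
Local Open Scope classical_set_scope.

(* A topological signature: Omega n is the (topological) space of n-ary
   operation symbols; Omega = disjoint union of the Omega n. *)
Definition tsignature := nat -> topologicalType.

(* An Omega-algebra structure on a topological space (continuity of the
   evaluation maps is a separate predicate, see [topological_algebra]). *)
Record topAlg (Omega : tsignature) := TopAlg {
  carrier :> topologicalType;
  op : forall n, Omega n -> ('I_n -> carrier) -> carrier }.
Arguments op {Omega} t {n} _ _.

Section Defs.
Variable Omega : tsignature.
Implicit Types A B : topAlg Omega.

Definition topological_algebra A :=
  forall n, continuous
    (fun p : (Omega n * prod_topology (fun _ : 'I_n => (A : topologicalType)))%type =>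
       op A p.1 p.2).

Definition zero_dim (T : topologicalType) :=
  forall (x : T) (U : set T), nbhs x U ->
    exists V : set T, clopen V /\ V x /\ V `<=` U.

Definition Stone_space (T : topologicalType) :=
  compact [set: T] /\ hausdorff_space T /\ zero_dim T.

Definition Stone_algebra A := topological_algebra A /\ Stone_space A.

Definition is_hom A B (f : A -> B) :=
  forall n (w : Omega n) (a : 'I_n -> A), f (op A w a) = op B w (f \o a).

Definition op_closed A (C : set A) :=
  forall n (w : Omega n) (a : 'I_n -> A), (forall i, C (a i)) -> C (op A w a).

Definition subAlg A (C : set A) (hC : op_closed C) : topAlg Omega :=
  @TopAlg Omega (set_type C)
    (fun n w a => SigSub (mem_set (hC n w (fun i => set_val (a i))
                     (fun i => set_valP (a i))))).

Definition prodAlg (k : nat) (F : 'I_k -> topAlg Omega) : topAlg Omega :=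
  @TopAlg Omega (prod_topology (fun i => (F i : topologicalType)))
    (fun n w a => fun i => op (F i) w (fun j => a j i)).

Definition Stone_pseudovariety (S : topAlg Omega -> Prop) :=
  [/\ (forall A, S A -> Stone_algebra A),
      (exists A, S A),
      (forall A B (f : A -> B), S A -> Stone_algebra B -> continuous f ->
          is_hom f -> (forall y : B, exists x, f x = y) -> S B),
      (forall A (C : set A) (hC : op_closed C), S A -> closed C ->
          S (subAlg hC)) &
      (forall (k : nat) (F : 'I_k -> topAlg Omega), (forall i, S (F i)) ->
          S (prodAlg F))].

Definition residually (C : topAlg Omega -> Prop) A :=
  forall x y : A, x <> y ->
    exists B (f : A -> B), C B /\ continuous f /\ is_hom f /\ f x <> f y.

Definition gen_subalg A (Y : set A) : set A :=
  \bigcap_(Z in [set Z : set A | Y `<=` Z /\ op_closed Z]) Z.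

Definition generating_mapping (X : topologicalType) A (iota : X -> A) :=
  closure (gen_subalg (range iota)) = [set: A].

Definition S_free_Stone (S : topAlg Omega -> Prop) (X : topologicalType)
    A (iota : X -> A) :=
  [/\ Stone_algebra A, continuous iota, generating_mapping iota,
      residually S A &
      forall (T : topAlg Omega) (phi : X -> T), S T -> continuous phi ->
        exists! g : A -> T, continuous g /\ is_hom g /\ g \o iota = phi].

End Defs.

(* Main.v *)
Require Import Defs.
From HB Require Import structures.
From mathcomp Require Import all_boot all_order all_algebra.
From mathcomp Require Import all_classical all_reals all_analysis.
Local Open Scope classical_set_scope.

Lemma st_open (T : topologicalType) (C : set T) (U : set (set_type C)) :
  open U <-> exists2 V, open V & set_val @^-1` V = U.
Proof. split; by case=> V oV <-; exists V. Qed.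

Lemma st_val_cont (T : topologicalType) (C : set T) : continuous (@set_val T C).
Proof. exact: initial_continuous. Qed.

Lemma st_cont_into (Y T : topologicalType) (C : set T) (f : Y -> set_type C) :
  continuous (set_val \o f) -> continuous f.
Proof. exact: (@continuous_comp_initial _ Y T set_val f). Qed.

Lemma st_compact (T : topologicalType) (C : set T) : compact C -> compact [set: set_type C].
Proof.
move=> cC F PF _.
have [|x [Cx clx]] := cC (set_val @ F) _ _.
- rewrite /fmap /=.
  have -> : set_val @^-1` C = [set: set_type C].
    by apply/seteqP; split => // -[y /= yC] _; exact: set_mem.
  exact: filterT.
exists (exist _ x (mem_set Cx)); split => //.
move=> A B FA; rewrite nbhsE; case=> O [oO Ox] OB.
have [V oV eO] := (st_open _ _ O).1 oO.
have Vx : V x by rewrite -eO in Ox.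
have h1 : (set_val @ F) (set_val @` A).
  by rewrite /fmap /=; apply: filterS FA => y Ay; exists y.
have h2 : nbhs x V by apply: open_nbhs_nbhs.
have [z [[a Aa az] Vz]] := clx _ _ h1 h2.
exists a; split => //; apply: OB; rewrite -eO /=; by rewrite az.
Qed.

Lemma st_hausdorff (T : topologicalType) (C : set T) :
  hausdorff_space T -> hausdorff_space (set_type C).
Proof.
rewrite !open_hausdorff => hT x y xy.
have /hT [[U V] /= [xU yV] [oU oV UV]] : set_val x != set_val y.
  by apply: contra xy => /eqP /val_inj ->.
exists (set_val @^-1` U, set_val @^-1` V) => /=.
  by rewrite !inE; split; apply: set_mem.
split; [by apply/st_open; exists U|by apply/st_open; exists V|].
apply/eqP/seteqP; split => // z [Uz Vz].
by move/eqP: UV => /seteqP [+ _] => /(_ (set_val z)); apply.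
Qed.

Lemma prod_hausdorff (I : eqType) (K : I -> topologicalType) :
  (forall i, hausdorff_space (K i)) -> hausdorff_space (prod_topology K).
Proof. move=> h; exact: (@hausdorff_product I K h). Qed.

Lemma prod_compact (I : eqType) (K : I -> topologicalType) :
  (forall i, compact [set: K i]) -> compact [set: prod_topology K].
Proof.
move=> h; have := @tychonoff I K (fun i => setT) h.
by have -> : [set f : forall i, K i | forall i, [set: K i] (f i)] = setT by apply/seteqP; split.
Qed.

Lemma prod_zdl (I : choiceType) (K : I -> topologicalType) :
  (forall i, zero_dimensional (K i)) -> zero_dimensional (prod_topology K).
Proof. move=> h; exact: (@zero_dimension_prod I K h). Qed.

Lemma zd_of (T : topologicalType) :
  hausdorff_space T -> compact [set: T] -> zero_dimensional T -> zero_dim T.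
Proof.
move=> hT cT zT x U xU.
have := @zero_dimensional_cvg T x hT zT cT U xU.
by case=> D [Dx cD] DU; exists D.
Qed.

Lemma zdl_of (T : topologicalType) :
  hausdorff_space T -> zero_dim T -> zero_dimensional T.
Proof.
move=> hT zT x y xy.
have [A [oA xA yA]] := hausdorff_accessible hT xy.
have [V [cV [Vx VA]]] := zT x A (open_nbhs_nbhs (conj oA (set_mem xA))).
exists V; split => // Vy.
by move: yA; rewrite inE => /(_ (VA _ Vy)).
Qed.

Lemma st_zdl (T : topologicalType) (C : set T) :
  zero_dimensional T -> zero_dimensional (set_type C).
Proof.
move=> zT x y xy.
have /zT [U [cU Ux Uy]] : set_val x != set_val y.
  by apply: contra xy => /eqP /val_inj ->.
exists (set_val @^-1` U); split => //.
by apply: preimage_clopen => //; exact: st_val_cont.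
Qed.

Lemma closed_eqset (T U : topologicalType) (f g : T -> U) :
  hausdorff_space U -> continuous f -> continuous g -> closed [set x | f x = g x].
Proof.
move=> hU cf cg p clp; apply: contrapT => fg.
move: hU; rewrite open_hausdorff => /(_ (f p) (g p)).
have /[swap]/[apply] : f p != g p by apply/eqP.
case=> -[A B] /= [fA gB] [oA oB AB].
have nA : nbhs p (f @^-1` A) by apply: cf; apply: open_nbhs_nbhs; split => //; exact: set_mem.
have nB : nbhs p (g @^-1` B) by apply: cg; apply: open_nbhs_nbhs; split => //; exact: set_mem.
have [z [/= fgz [Az Bz]]] := clp _ (filterI nA nB).
move/eqP: AB => /seteqP [+ _] => /(_ (f z)); apply; split => //.
by rewrite fgz.
Qed.

Lemma closure_min (T : topologicalType) (A B : set T) :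
  A `<=` B -> closed B -> closure A `<=` B.
Proof. by move=> AB cB; rewrite [X in _ `<=` X](closure_id B).1 //; exact: closureS. Qed.
Lemma prod_cont_into (Y : topologicalType) (I : Type) (K : I -> topologicalType)
  (f : Y -> prod_topology K) : (forall i, continuous (fun y => f y i)) -> continuous f.
Proof.
move=> cf y; apply/cvg_sup => i.
have := @continuous_comp_initial _ Y (K i) (fun g : (forall i, K i) => g i) f (cf i).
by move=> /(_ y).
Qed.

Lemma proj_cont (I : Type) (K : I -> topologicalType) (i : I) :
  continuous (fun f : prod_topology K => f i).
Proof.
move=> f. 
have := @proj_continuous {classic I} K i f.
done.
Qed.


Lemma closure_image_sub (T U : topologicalType) (h : T -> U) (Z : set T) (W : set U) :
  continuous h -> (forall z, Z z -> W (h z)) -> closed W ->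
  forall z, closure Z z -> W (h z).
Proof.
move=> ch hZ cW; apply: closure_min => //.
by apply: preimage_closed => // x _; exact: ch.
Qed.

Lemma box_closure (n : nat) (A : topologicalType) (Z : set A)
    (a : prod_topology (fun _ : 'I_n => A)) :
  (forall i, closure Z (a i)) ->
  closure [set b : prod_topology (fun _ : 'I_n => A) | forall i, Z (b i)] a.
Proof.
set box := [set b : prod_topology (fun _ : 'I_n => A) | forall i, Z (b i)].
suff H : forall k (b : prod_topology (fun _ : 'I_n => A)),
    (forall i : 'I_n, (i < k)%N -> closure Z (b i)) ->
    (forall i : 'I_n, (k <= i)%N -> Z (b i)) -> closure box b.
  by move=> ha; apply: (H n) => // i; rewrite leqNgt ltn_ord.
elim=> [|k IH] b h1 h2.
  by apply: subset_closure => i; apply: h2.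
have [kn|nk] := ltnP k n; last first.
  apply: IH => i ik; first by apply: h1; rewrite ltnS ltnW.
  by have := leq_trans nk ik; rewrite leqNgt ltn_ord.
pose ik : 'I_n := Ordinal kn.
have -> : b = dfwith b ik (b ik).
  by apply: functional_extensionality_dep => j; have [<-|ne] := eqVneq ik j;
    [rewrite dfwithin|rewrite dfwithout].
apply: (@closure_image_sub A (prod_topology (fun _ : 'I_n => A)) (dfwith b ik : A -> prod_topology (fun _ : 'I_n => A)) Z (closure box)).
- exact: (@dfwith_continuous _ (fun _ : 'I_n => A)).
- move=> z Zz; apply: IH => j; have [<-|ne] := eqVneq ik j.
  + by rewrite /= ltnn.
  + rewrite dfwithout // => jk; apply: h1; rewrite ltnS ltnW //.
  + by rewrite dfwithin.
  + rewrite dfwithout // => kj; apply: h2; rewrite ltn_neqAle kj andbT.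
    by apply: contra ne => /eqP e; apply/eqP/val_inj.
- exact: closed_closure.
- exact: h1.
Qed.

Section Alg.
Variable Omega : tsignature.

Lemma gen_min (A : topAlg Omega) (Y Z : set A) :
  Y `<=` Z -> op_closed Z -> gen_subalg Y `<=` Z.
Proof. by move=> YZ cZ x; apply; split. Qed.

Lemma gen_sub (A : topAlg Omega) (Y : set A) : Y `<=` gen_subalg Y.
Proof. by move=> x Yx Z [YZ _]; apply: YZ. Qed.

Lemma gen_op_closed (A : topAlg Omega) (Y : set A) : op_closed (gen_subalg Y).
Proof. move=> n w a ha Z Hz; case: (Hz) => YZ cZ; apply: cZ => i; exact: ha. Qed.

Lemma closure_op_closed (A : topAlg Omega) (Z : set A) :
  topological_algebra A -> op_closed Z -> op_closed (closure Z).
Proof.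
move=> tA cZ n w a ha B nB.
have clb := @box_closure n A Z a ha.
pose PA := prod_topology (fun _ : 'I_n => (A : topologicalType)).
pose a' : PA := a.
have ct : (fun b : PA => op A w b) @ a' --> op A w a.
  apply: (@continuous2_cvg _ (Omega n) PA A
     (nbhs a') _ (fun _ => w) id (fun w' b => op A w' b) w a').
  - exact: (tA n (w, a)).
  - exact: cvg_cst.
  - exact: cvg_id.
have [b [bZ Bb]] := clb _ (ct _ nB).
by exists (op A w b); split => //; apply: cZ.
Qed.

Lemma hom_eq_gen (B : topAlg Omega) (T : topAlg Omega) (X : topologicalType)
  (iota : X -> B) (g1 g2 : B -> T) :
  generating_mapping iota -> hausdorff_space T ->
  continuous g1 -> continuous g2 -> is_hom g1 -> is_hom g2 ->
  g1 \o iota = g2 \o iota -> g1 = g2.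
Proof.
move=> gen hT c1 c2 h1 h2 e; apply: funext => b.
have sub : gen_subalg (range iota) `<=` [set b | g1 b = g2 b].
  apply: gen_min.
    by move=> _ [x _ <-]; move: (congr1 (fun f => f x) e).
  move=> n w a ha /=; rewrite h1 h2; congr (op T w _); apply: funext => i.
  exact: ha.
have := @closure_min B _ _ sub (@closed_eqset B T g1 g2 hT c1 c2).
by rewrite gen; apply.
Qed.

End Alg.


Lemma cont_comp (R T U : topologicalType) (f : R -> T) (g : T -> U) :
  continuous f -> continuous g -> continuous (g \o f).
Proof. by move=> cf cg x; apply: continuous_comp; [exact: cf|exact: cg]. Qed.

Section Two.
Variable Omega : tsignature.

Definition pair2 (T1 T2 : topAlg Omega) : 'I_2 -> topAlg Omega :=
  fun i => match val i with 0 => T1 | _ => T2 end.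

Definition mk2 (Y : Type) (T1 T2 : topAlg Omega) (f1 : Y -> T1) (f2 : Y -> T2) :
  Y -> prodAlg (pair2 T1 T2) :=
  fun y i => match val i as m return (Topological.sort (carrier (match m with 0 => T1 | _ => T2 end))) with
             | 0 => f1 y | _ => f2 y end.
Arguments mk2 {Y T1 T2}.

Lemma mk2_cont (Y : topologicalType) (T1 T2 : topAlg Omega) (f1 : Y -> T1) (f2 : Y -> T2) :
  continuous f1 -> continuous f2 -> continuous (mk2 f1 f2).
Proof.
move=> c1 c2; apply: prod_cont_into => -[[|m] Hm]; [exact: c1|exact: c2].
Qed.

Lemma mk2_hom (Y T1 T2 : topAlg Omega) (f1 : Y -> T1) (f2 : Y -> T2) :
  is_hom f1 -> is_hom f2 -> is_hom (mk2 f1 f2).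
Proof.
move=> h1 h2 n w a; apply: functional_extensionality_dep => -[[|m] Hm] /=.
  exact: h1.
exact: h2.
Qed.

Lemma mk2_S (S : topAlg Omega -> Prop) (T1 T2 : topAlg Omega) :
  Stone_pseudovariety S -> S T1 -> S T2 -> S (prodAlg (pair2 T1 T2)).
Proof.
case=> _ _ _ _ Hp s1 s2; apply: Hp => -[[|m] Hm] //.
Qed.

Definition ord0_elim (T : Type) (i : 'I_0) : T.
Proof. by case: i. Defined.

Definition triv0 (T : topAlg Omega) : 'I_0 -> topAlg Omega := fun _ => T.

Definition mk0 (Y : Type) (T : topAlg Omega) : Y -> prodAlg (triv0 T) :=
  fun _ i => ord0_elim _ i.
Arguments mk0 {Y T}.

Lemma mk0_cont (Y : topologicalType) (T : topAlg Omega) : continuous (@mk0 Y T : Y -> prodAlg (triv0 T)).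
Proof. by apply: prod_cont_into => -[]. Qed.

Lemma mk0_hom (Y T : topAlg Omega) : is_hom (@mk0 Y T : Y -> prodAlg (triv0 T)).
Proof. by move=> n w a; apply: functional_extensionality_dep => -[]. Qed.

Lemma mk0_S (S : topAlg Omega -> Prop) (T : topAlg Omega) :
  Stone_pseudovariety S -> S (prodAlg (triv0 T)).
Proof. by case=> _ _ _ _ Hp; apply: Hp => -[]. Qed.

End Two.
Arguments pair2 {Omega}.
Arguments triv0 {Omega}.
Arguments mk0 {Omega Y T}.
Arguments mk2 {Omega Y T1 T2}.


Lemma fst_cont (U V : topologicalType) : continuous (@fst U V).
Proof. by case=> a b; apply: cvg_fst. Qed.
Lemma snd_cont (U V : topologicalType) : continuous (@snd U V).
Proof. by case=> a b; apply: cvg_snd. Qed.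

Lemma closed_preimage_cont (T U : topologicalType) (f : T -> U) :
  (forall C, closed C -> closed (f @^-1` C)) -> continuous f.
Proof.
move=> h; apply/continuousP => A oA.
rewrite -[A]setCK -preimage_setC; apply: closed_openC; apply: h.
exact: open_closedC.
Qed.

Section Ext.
Variables (Omega : tsignature) (S : topAlg Omega -> Prop).
Hypothesis HS : Stone_pseudovariety S.
Variables (X : topologicalType) (A1 : topAlg Omega) (iota1 : X -> A1).
Variables (B : topAlg Omega) (phi : X -> B).
Hypotheses (F1 : S_free_Stone S iota1) (SB : Stone_algebra B)
  (RB : residually S B) (cphi : continuous phi).

Lemma S_hausdorff {T : topAlg Omega} : S T -> hausdorff_space T.
Proof. by case: HS => H _ _ _ _ /H [_ [_ []]]. Qed.

Definition good3 (T : topAlg Omega) (h : B -> T) (g : A1 -> T) :=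
  [/\ S T, continuous h /\ is_hom h, continuous g /\ is_hom g & g \o iota1 = h \o phi].

Definition Wf (a : A1) (K : set B) :=
  exists T h g, @good3 T h g /\ K = h @^-1` [set g a].

Lemma fiber_ne {T : topAlg Omega} {h g} (a : A1) : @good3 T h g -> exists b, h b = g a.
Proof.
case=> sT [ch hh] [cg hg] e.
have hT := S_hausdorff sT.
have cB : compact [set: B] by case: SB => _ [].
have cR : closed (range h).
  by apply: compact_closed hT _; apply: continuous_compact cB; exact: continuous_subspaceT.
have oR : op_closed (range h).
  move=> n w y hy.
  have [bb hb] := @choice _ _ (fun i b => h b = y i) (fun i => let: ex_intro2 b _ hb := hy i in ex_intro _ b hb).
  exists (op B w bb) => //; rewrite hh; congr (op T w _); apply: funext => i; exact: hb.
have sub : gen_subalg (range iota1) `<=` g @^-1` (range h).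
  apply: gen_min.
    move=> _ [x _ <-]; exists (phi x) => //; move: (congr1 (fun f => f x) e) => /= ->; done.
  move=> n w a' ha' /=; rewrite hg; apply: oR => i; exact: ha'.
have cl : closed (g @^-1` range h) by apply: preimage_closed => // x _; exact: cg.
have := @closure_min A1 _ _ sub cl.
case: F1 => _ _ gen _ _; rewrite gen => /(_ a I) [b _ hb].
by exists b.
Qed.

Lemma Wf_closed {a K} : Wf a K -> closed K.
Proof.
case=> T [h [g [[sT [ch _] _ _] ->]]].
apply: preimage_closed => [x _|]; first exact: ch.
exact/accessible_closed_set1/hausdorff_accessible/S_hausdorff.
Qed.

Lemma Wf_ex a : exists K, Wf a K.
Proof.
exists setT, (prodAlg (triv0 A1)), mk0, mk0; split; last first.
  by apply/seteqP; split => // b _; apply: functional_extensionality_dep => -[].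
split.
- exact: mk0_S.
- split; [exact: mk0_cont|exact: mk0_hom].
- split; [exact: mk0_cont|exact: mk0_hom].
- by apply: funext => x; apply: functional_extensionality_dep => -[].
Qed.

Lemma Wf_dir a K1 K2 : Wf a K1 -> Wf a K2 -> exists2 K, Wf a K & K `<=` K1 `&` K2.
Proof.
case=> T1 [h1 [g1 [[s1 [ch1 hh1] [cg1 hg1] e1] ->]]].
case=> T2 [h2 [g2 [[s2 [ch2 hh2] [cg2 hg2] e2] ->]]].
exists ((mk2 h1 h2) @^-1` [set mk2 g1 g2 a]).
  exists (prodAlg (pair2 T1 T2)), (mk2 h1 h2), (mk2 g1 g2); split => //.
  split.
  - exact: mk2_S.
  - split; [exact: mk2_cont|exact: mk2_hom].
  - split; [exact: mk2_cont|exact: mk2_hom].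
  - apply: funext => x; apply: functional_extensionality_dep => -[[|m] Hm] /=.
      by move: (congr1 (fun f => f x) e1).
    by move: (congr1 (fun f => f x) e2).
move=> b /= E; split => /=.
  by have := congr1 (fun f => f (@Ordinal 2 0 isT)) E.
by have := congr1 (fun f => f (@Ordinal 2 1 isT)) E.
Qed.

Lemma psi_ex a : exists b, forall K, Wf a K -> K b.
Proof.
pose Fa := filter_from (Wf a) id.
have FF : Filter Fa := filter_from_filter (Wf_ex a) (@Wf_dir a).
have PF : ProperFilter Fa.
  apply: filter_from_proper => K [T [h [g [gd ->]]]].
  by have [b hb] := fiber_ne a gd; exists b.
have cB : compact [set: B] by case: SB => _ [].
have [|b [_ clb]] := cB Fa PF.
  by have [K WK] := Wf_ex a; exists K.
exists b => K WK; apply: (Wf_closed WK) => N nN.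
by apply: clb nN; exists K.
Qed.

Lemma psi_uniq {a b b'} : (forall K, Wf a K -> K b) -> (forall K, Wf a K -> K b') -> b = b'.
Proof.
move=> hb hb'; apply: contrapT => nb.
have [T [f [sT [cf [hf fb]]]]] := RB b b' nb.
case: F1 => _ _ _ _ univ.
have [g [[cg [hg eg]] _]] := univ T (f \o phi) sT (@cont_comp _ _ _ _ _ cphi cf).
have W : Wf a (f @^-1` [set g a]) by exists T, f, g; split.
by apply: fb; rewrite (hb _ W) (hb' _ W).
Qed.


Definition psi : A1 -> B := projT1 (choice psi_ex).
Lemma psi_spec a K : Wf a K -> K (psi a).
Proof. exact: (projT2 (choice psi_ex) a). Qed.

Lemma psi_iota : psi \o iota1 = phi.
Proof.
apply: funext => x /=; apply: psi_uniq; first exact: psi_spec.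
move=> K [T [h [g [[_ _ _ e] ->]]]] /=.
by move: (congr1 (fun f => f x) e) => /= ->.
Qed.

Lemma psi_hom : is_hom psi.
Proof.
move=> n w a; apply: psi_uniq; first exact: psi_spec.
move=> K [T [h [g [gd ->]]]] /=.
case: (gd) => _ [_ hh] [_ hg] _.
rewrite hh hg; congr (op T w _); apply: funext => i /=.
have W : Wf (a i) (h @^-1` [set g (a i)]) by exists T, h, g.
exact: (psi_spec _ _ W).
Qed.

Definition Gam : set (A1 * B) :=
  [set p | forall T h g, @good3 T h g -> h p.2 = g p.1].

Lemma Gam_psi p : Gam p <-> p.2 = psi p.1.
Proof.
split.
  move=> gp; apply: psi_uniq; last exact: psi_spec.
  by move=> K [T [h [g [gd ->]]]]; exact: gp.
case: p => a b /= -> T h g gd /=.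
have W : Wf a (h @^-1` [set g a]) by exists T, h, g.
exact: (psi_spec _ _ W).
Qed.

Lemma Gam_closed : closed Gam.
Proof.
move=> p clp T h g gd.
case: (gd) => sT [ch _] [cg _] _.
have cE : closed [set q : A1 * B | (h \o snd) q = (g \o fst) q].
  apply: closed_eqset; first exact: S_hausdorff sT.
    exact: cont_comp (@snd_cont _ _) ch.
  exact: cont_comp (@fst_cont _ _) cg.
have sub : Gam `<=` [set q : A1 * B | (h \o snd) q = (g \o fst) q].
  by move=> q Gq; exact: Gq.
exact: (@closure_min _ _ _ sub cE p clp).
Qed.

Lemma psi_cont : continuous psi.
Proof.
apply: closed_preimage_cont => C cC.
have -> : psi @^-1` C = fst @` (Gam `&` (snd @^-1` C)).
  apply/seteqP; split.
    by move=> a Ca; exists (a, psi a) => //; split => //; exact/Gam_psi.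
  by move=> _ [[a b] [/Gam_psi /= -> Cb] <-].
have [_ [cA1 [hA1 _]]] : Stone_algebra A1 by case: F1.
apply: compact_closed hA1 _.
apply: continuous_compact; first exact/continuous_subspaceT/fst_cont.
apply: (@subclosed_compact _ _ [set: A1 * B]).
- apply: closedI; first exact: Gam_closed.
  by apply: preimage_closed => // x _; exact: snd_cont.
- rewrite -setXTT; apply: compact_setX => //; by case: SB => _ [].
- by [].
Qed.

End Ext.

Lemma ext_free (Omega : tsignature) (S : topAlg Omega -> Prop) (X : topologicalType)
  (A1 : topAlg Omega) (iota1 : X -> A1) (B : topAlg Omega) (phi : X -> B) :
  Stone_pseudovariety S -> S_free_Stone S iota1 -> Stone_algebra B ->
  residually S B -> continuous phi ->
  exists psi : A1 -> B, [/\ continuous psi, is_hom psi & psi \o iota1 = phi].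
Proof.
move=> HS F1 SB RB cphi.
exists (@psi Omega S HS X A1 iota1 B phi F1 SB); split.
- exact: psi_cont.
- exact: psi_hom.
- exact: psi_iota.
Qed.

Arguments cont_comp {R T U f g}.
Arguments ext_free {Omega S X A1 iota1 B phi}.

Lemma hom_comp (Omega : tsignature) (A B C : topAlg Omega) (f : A -> B) (g : B -> C) :
  is_hom f -> is_hom g -> is_hom (g \o f).
Proof. by move=> hf hg n w a /=; rewrite hf hg. Qed.

Lemma hom_id (Omega : tsignature) (A : topAlg Omega) : is_hom (@id A).
Proof. by []. Qed.
Arguments hom_comp {Omega A B C f g}.

Lemma uniq_part (Omega : tsignature) (S : topAlg Omega -> Prop) (X : topologicalType) :
  Stone_pseudovariety S ->
  (forall (A1 A2 : topAlg Omega) (iota1 : X -> A1) (iota2 : X -> A2),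
     S_free_Stone S iota1 -> S_free_Stone S iota2 ->
     exists (psi : A1 -> A2) (psi' : A2 -> A1),
       continuous psi /\ continuous psi' /\ is_hom psi /\ is_hom psi' /\
       cancel psi psi' /\ cancel psi' psi /\ psi \o iota1 = iota2).
Proof.
move=> HS A1 A2 iota1 iota2 F1 F2.
have F1' := F1; have F2' := F2.
case: F1' => SA1 ci1 g1 r1 _; case: F2' => SA2 ci2 g2 r2 _.
have [psi [cp hp ep]] := ext_free HS F1 SA2 r2 ci2.
have [psi' [cp' hp' ep']] := ext_free HS F2 SA1 r1 ci1.
have hA1 : hausdorff_space A1 by case: SA1 => _ [_ []].
have hA2 : hausdorff_space A2 by case: SA2 => _ [_ []].
exists psi, psi'; do 4 (split => //); split; [|split => //].
- move=> a; have := @hom_eq_gen Omega A1 A1 X iota1 (psi' \o psi) id g1 hA1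
    (cont_comp cp cp') (fun x => @cvg_id _ _) (hom_comp hp hp') (@hom_id _ _).
  move=> /(_ _) E; apply: (congr1 (fun f => f a) (E _)).
  apply: funext => x /=.
  by rewrite (congr1 (fun f => f x) ep : psi (iota1 x) = iota2 x) (congr1 (fun f => f x) ep' : psi' (iota2 x) = iota1 x).
- move=> a; have := @hom_eq_gen Omega A2 A2 X iota2 (psi \o psi') id g2 hA2
    (cont_comp cp' cp) (fun x => @cvg_id _ _) (hom_comp hp' hp) (@hom_id _ _).
  move=> /(_ _) E; apply: (congr1 (fun f => f a) (E _)).
  apply: funext => x /=.
  by rewrite (congr1 (fun f => f x) ep' : psi' (iota2 x) = iota1 x) (congr1 (fun f => f x) ep : psi (iota1 x) = iota2 x).
Qed.

Arguments cont_comp {R T U f g}.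

Lemma pair_cont (Y U V : topologicalType) (f : Y -> U) (g : Y -> V) :
  continuous f -> continuous g -> continuous (fun y => (f y, g y)).
Proof. by move=> cf cg y; apply: cvg_pair; [exact: cf|exact: cg]. Qed.

Section Free.
Variables (Omega : tsignature) (S : topAlg Omega -> Prop).
Hypothesis HS : Stone_pseudovariety S.
Variable X : topologicalType.

Inductive term : Type := Var of X | App n of Omega n & ('I_n -> term).
Definition P := set (set term).
Definition data := (set P * set (set P) * (forall n, Omega n -> ('I_n -> P) -> P -> Prop) * (X -> P))%type.
Record wit := Wit { wT : topAlg Omega; wphi : X -> wT; we : wT -> P }.
Definition sig_of (w : wit) : data :=
  (range (we w), [set we w @` U | U in [set U | open U]],
   (fun n o p q => exists a, p = we w \o a /\ q = we w (op (wT w) o a)),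
   we w \o wphi w).
Definition good (w : wit) := [/\ S (wT w), continuous (wphi w) & injective (we w)].
Definition I0 := {d : data | exists w, good w /\ d = sig_of w}.
Definition J : choiceType := {classic I0}.
Definition witof (i : J) : wit := projT1 (cid (proj2_sig i)).
Lemma witof_good i : good (witof i).
Proof. exact: (projT2 (cid (proj2_sig i))).1. Qed.
Lemma witof_sig i : proj1_sig i = sig_of (witof i).
Proof. exact: (projT2 (cid (proj2_sig i))).2. Qed.

Definition Fam (i : J) : topologicalType := wT (witof i).
Definition Pi : topAlg Omega := @TopAlg Omega (prod_topology Fam)
  (fun n o a => fun i => op (wT (witof i)) o (fun j => a j i)).

Lemma Fam_Stone i : Stone_algebra (wT (witof i)).
Proof. by case: HS => H _ _ _ _; apply: H; case: (witof_good i). Qed.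

Lemma Pi_top : topological_algebra Pi.
Proof.
move=> n; apply: prod_cont_into => i.
have [tA _] := Fam_Stone i.
pose g := fun p : (Omega n * prod_topology (fun _ : 'I_n => (Pi : topologicalType)))%type =>
  (p.1, (fun j => p.2 j i) : prod_topology (fun _ : 'I_n => (wT (witof i) : topologicalType))).
have cg : continuous g.
  apply: pair_cont; first exact: fst_cont.
  apply: prod_cont_into => j.
  exact: (cont_comp (cont_comp (@snd_cont _ _) (@proj_cont 'I_n (fun _ => (Pi : topologicalType)) j))
                    (@proj_cont J Fam i)).
exact: (cont_comp cg (tA n)).
Qed.

Definition iota0 (x : X) : Pi := fun i => wphi (witof i) x.
Definition C : set Pi := closure (gen_subalg (range iota0)).
Definition hC : op_closed C := @closure_op_closed _ Pi _ Pi_top (@gen_op_closed _ Pi _).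
Definition Afree : topAlg Omega := subAlg hC.
Lemma iota0C x : C (iota0 x).
Proof. by apply: subset_closure; apply: gen_sub; exists x. Qed.
Definition iota (x : X) : Afree := exist _ (iota0 x) (mem_set (iota0C x)).


Lemma Pi_compact : compact [set: Pi].
Proof. by apply: prod_compact => i; case: (Fam_Stone i) => _ []. Qed.
Lemma Pi_hausdorff : hausdorff_space Pi.
Proof. by apply: prod_hausdorff => i; case: (Fam_Stone i) => _ [_ []]. Qed.
Lemma Pi_zdl : zero_dimensional Pi.
Proof.
apply: prod_zdl => i; case: (Fam_Stone i) => _ [_ [h z]].
exact: zdl_of.
Qed.

Lemma Afree_Stone : Stone_algebra Afree.
Proof.
have cA : compact [set: Afree].
  apply: st_compact; apply: (subclosed_compact _ Pi_compact) => //.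
  exact: closed_closure.
have hA : hausdorff_space Afree by apply: st_hausdorff; exact: Pi_hausdorff.
split; last first.
  split => //; split => //; apply: zd_of => //.
  by apply: st_zdl; exact: Pi_zdl.
move=> n; apply: st_cont_into.
pose g := fun p : (Omega n * prod_topology (fun _ : 'I_n => (Afree : topologicalType)))%type =>
  (p.1, (fun j => set_val (p.2 j)) : prod_topology (fun _ : 'I_n => (Pi : topologicalType))).
have cg : continuous g.
  apply: pair_cont; first exact: fst_cont.
  apply: prod_cont_into => j.
  exact: (cont_comp (cont_comp (@snd_cont _ _) (@proj_cont 'I_n (fun _ => (Afree : topologicalType)) j))
                    (@st_val_cont _ C)).
exact: (cont_comp cg (Pi_top n)).
Qed.

Lemma iota_cont : continuous iota.
Proof.
apply: st_cont_into; apply: prod_cont_into => i.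
by case: (witof_good i).
Qed.

Lemma iota_gen : generating_mapping iota.
Proof.
set G := gen_subalg (range iota).
pose Z := [set p : Pi | exists q : Afree, G q /\ set_val q = p].
have sub : gen_subalg (range iota0) `<=` Z.
  apply: gen_min.
    by move=> _ [x _ <-]; exists (iota x); split => //; apply: gen_sub; exists x.
  move=> n w a ha.
  have [q hq] := @choice _ _ (fun i (q : Afree) => G q /\ set_val q = a i) ha.
  exists (op Afree w q); split.
    by apply: gen_op_closed => i; exact: (hq i).1.
  rewrite /= /Pi; apply: functional_extensionality_dep => i /=.
  by congr (op _ w _); apply: funext => j; rewrite (hq j).2.
apply/seteqP; split => // y _ N; rewrite nbhsE; case=> O [oO Oy] ON.
have [V oV eO] := (st_open _ _ O).1 oO.
have Vy : V (set_val y) by rewrite -eO in Oy.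
have Cy : C (set_val y) by case: y {Oy ON} Vy => y /= yC _; exact: set_mem.
have [p [gp Vp]] := Cy V (open_nbhs_nbhs (conj oV Vy)).
have [q [Gq qp]] := sub p gp.
exists q; split => //; apply: ON; rewrite -eO /=; by rewrite qp.
Qed.

Lemma Afree_res : residually S Afree.
Proof.
move=> x y xy.
have [i ni] : exists i, set_val x i <> set_val y i.
  apply: contrapT => H; apply: xy; apply: val_inj.
  by apply: functional_extensionality_dep => i; apply: contrapT => ne; apply: H; exists i.
exists (wT (witof i)), (fun q : Afree => set_val q i); split.
  by case: (witof_good i).
split; first exact: (cont_comp (@st_val_cont _ C) (@proj_cont J Fam i)).
by split.
Qed.


Section Univ.
Variables (T : topAlg Omega) (phi : X -> T).
Hypotheses (sT : S T) (cphi : continuous phi).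

Fixpoint ev (t : term) : T :=
  match t with Var x => phi x | App n w s => op T w (fun i => ev (s i)) end.

Lemma gen_range_ev : gen_subalg (range phi) `<=` range ev.
Proof.
apply: gen_min; first by move=> _ [x _ <-]; exists (Var x).
move=> n w a ha.
have [s hs] := @choice _ _ (fun i t => ev t = a i) (fun i => let: ex_intro2 t _ ht := ha i in ex_intro _ t ht).
exists (@App n w s) => //=; congr (op T w _); apply: funext => i; exact: hs.
Qed.

Lemma T_Stone : Stone_algebra T.
Proof. by case: HS => H _ _ _ _; apply: H. Qed.

Definition CT : set T := closure (gen_subalg (range phi)).
Definition hCT : op_closed CT :=
  @closure_op_closed _ T _ (proj1 T_Stone) (@gen_op_closed _ T _).
Definition Tp : topAlg Omega := subAlg hCT.
Lemma phiCT x : CT (phi x).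
Proof. by apply: subset_closure; apply: gen_sub; exists x. Qed.
Definition phip (x : X) : Tp := exist _ (phi x) (mem_set (phiCT x)).

Lemma Tp_S : S Tp.
Proof. by case: HS => _ _ _ H _; apply: H => //; exact: closed_closure. Qed.

Lemma phip_cont : continuous phip.
Proof. exact: st_cont_into. Qed.

Definition e (t : Tp) : P := [set D : set term | closure (ev @` D) (set_val t)].

Lemma e_inj : injective e.
Proof.
move=> t t' ett'; apply: contrapT => ne.
have [_ [_ [hT zT]]] := T_Stone.
have /(@zdl_of T hT zT) [U [[oU cU] Ut Ut']] : set_val t != set_val t'.
  by apply/eqP => /val_inj.
pose D := ev @^-1` U.
have etD : e t D.
  have Ct : CT (set_val t) by case: t {ett' ne Ut} => y /= yC; exact: set_mem.
  move=> N nN.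
  have nNU : nbhs (set_val t) (N `&` U).
    by apply: filterI nN _; apply: open_nbhs_nbhs.
  have := @closureS _ _ _ gen_range_ev _ Ct _ nNU.
  by case=> _ [[s _ <-] [Ns Us]]; exists (ev s); split => //; exists s.
have : e t' D by rewrite -ett'.
move=> /(@closure_min _ _ U) H; apply: Ut'; apply: H => //.
by move=> _ [s Ds <-].
Qed.

Definition wp : wit := @Wit Tp phip e.
Lemma wp_good : good wp.
Proof. split; [exact: Tp_S|exact: phip_cont|exact: e_inj]. Qed.
Definition ip : J := exist _ (sig_of wp) (ex_intro _ wp (conj wp_good erefl)).


Lemma univ_ex : exists g : Afree -> T, continuous g /\ is_hom g /\ g \o iota = phi.
Proof.
pose w2 := witof ip.
have E : sig_of w2 = sig_of wp by rewrite -witof_sig.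
have [_ _ inj2] := witof_good ip.
have Er : range (we w2) = range e by exact: (congr1 (fun d : data => d.1.1.1) E).
have Eo : [set we w2 @` U | U in [set U | open U]] = [set e @` U | U in [set U | open U]].
  exact: (congr1 (fun d : data => d.1.1.2) E).
have Eop := congr1 (fun d : data => d.1.2) E.
have Ephi : we w2 \o wphi w2 = e \o phip := congr1 (fun d : data => d.2) E.
have [h hh] := @choice _ _ (fun (t2 : wT w2) (t : Tp) => e t = we w2 t2)
  (fun t2 => let: ex_intro2 t _ ht := (eq_ind _ (fun R => R (we w2 t2)) (ex_intro2 _ _ t2 I erefl) _ Er) in ex_intro _ t ht).
have ch : continuous h.
  apply/continuousP => U oU.
  have : [set e @` U | U in [set U | open U]] (e @` U) by exists U.
  rewrite -Eo => -[U2 oU2 eU].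
  have -> : h @^-1` U = U2; last exact: oU2.
  apply/seteqP; split => t2 /=.
    move=> hU; have : (e @` U) (we w2 t2) by exists (h t2) => //; exact: hh.
    by rewrite -eU => -[t2' U2t2' /inj2 <-].
  move=> U2t2; have : (we w2 @` U2) (e (h t2)) by rewrite hh; exists t2.
  by rewrite eU => -[t Ut /e_inj <-].
have hhom : is_hom h.
  move=> n w a.
  have R2 : (sig_of w2).1.2 n w (we w2 \o a) (we w2 (op (wT w2) w a)) by exists a.
  have [a' [ea' eop]] := eq_ind _ (fun F => F n w (we w2 \o a) (we w2 (op (wT w2) w a))) R2 _ Eop.
  have ha : h \o a = a'.
    apply: funext => i /=; apply: e_inj; rewrite hh.
    exact: (congr1 (fun f => f i) ea').
  by apply: e_inj; rewrite hh eop ha.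
have hphi : h \o wphi w2 = phip.
  apply: funext => x /=; apply: e_inj; rewrite hh.
  exact: (congr1 (fun f => f x) Ephi).
exists (set_val \o h \o (fun q : Afree => set_val q ip)); split; [|split].
- apply: cont_comp; first exact: (cont_comp (@st_val_cont _ C) (@proj_cont J Fam ip)).
  apply: cont_comp ch _.
  exact: st_val_cont.
- by move=> n w a /=; rewrite hhom.
- apply: funext => x /=.
  by rewrite (congr1 (fun f => f x) hphi : h (wphi w2 x) = phip x).
Qed.

End Univ.

Theorem existence : exists (A : topAlg Omega) (iota : X -> A), S_free_Stone S iota.
Proof.
exists Afree, iota; split.
- exact: Afree_Stone.
- exact: iota_cont.
- exact: iota_gen.
- exact: Afree_res.
- move=> T phi sT cphi.
  have [g [cg [hg eg]]] := univ_ex _ _ sT cphi.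
  exists g; split => // g' [cg' [hg' eg']].
  apply: (@hom_eq_gen _ Afree T X iota g g' iota_gen) => //.
  + by case: (T_Stone _ sT) => _ [_ []].
  + by rewrite eg eg'.
Qed.

End Free.


Theorem proposition4p5 (Omega : tsignature) (S : topAlg Omega -> Prop)
  (X : topologicalType) :
  Stone_pseudovariety S ->
  (exists (A : topAlg Omega) (iota : X -> A), S_free_Stone S iota) /\
  (forall (A1 A2 : topAlg Omega) (iota1 : X -> A1) (iota2 : X -> A2),
     S_free_Stone S iota1 -> S_free_Stone S iota2 ->
     exists (psi : A1 -> A2) (psi' : A2 -> A1),
       continuous psi /\ continuous psi' /\ is_hom psi /\ is_hom psi' /\
       cancel psi psi' /\ cancel psi' psi /\ psi \o iota1 = iota2).
Proof.
move=> HS; split; first exact: (@existence Omega S HS X).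
exact: (@uniq_part Omega S X HS).
Qed.
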